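(* Let $\kappa$ be an ordinal of uncountable cofinality and let $Z$, $Z_X$, $Z_Y$ be as described in the context. Let $z: \alpha \to \alpha$ be a morphism in $Z$. If there exist morphisms $u: \alpha \to \beta$ and $v: \alpha \to \gamma$ in $Z$ such that $u z u^{-1}$ lies in $Z_X$ and $v z v^{-1}$ lies in $Z_Y$, then $z = \mathrm{id}_\alpha$.
   Context: For an ordinal $\alpha \ge 2$ let $G_\alpha$ be the free group on the set $\alpha$; for $\gamma \le \alpha$ let $D^\gamma_\alpha: G_\gamma \to G_\alpha$ be the natural inclusion. Let $Z$ be the groupoid with object set $[2,\kappa)$ generated by: the elements of $G_\alpha$ as automorphisms of the object $\alpha$; and, for each pair $\alpha \neq \beta$ in $[2,\kappa)$, a morphism $y^\beta_\alpha: \beta \to \alpha$; subject to the relations of each group $G_\alpha$ and the relations $y^\beta_\alpha \, D^{\varepsilon}_\beta(a)\, y^\alpha_\beta = D^{\varepsilon}_\alpha(a)$ for all $a \in G_\varepsilon$, $\varepsilon = \min(\alpha,\beta)$ (so $y^\alpha_\beta = (y^\beta_\alpha)^{-1}$). (This is the fundamental groupoid of the graph of groups with vertex groups $G_\alpha$, edges $y^\beta_\alpha$, edge groups $G_{\min(\alpha,\beta)}$ and inclusions as edge maps.) $Z_X$ is the subgroupoid of $Z$ consisting of the morphisms in the image of some vertex group $G_\alpha$. $Z_Y$ is the subgroupoid of $Z$ generated by the edges $y^\beta_\alpha$. *)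

(* Defs.v *)
From Stdlib Require Import List Relations Bool.
Import ListNotations.
Set Implicit Arguments.

(* An ordinal kappa is represented by the well-ordered set of ordinals < kappa. *)
Record wellOrder := WellOrder {
  wo_car :> Type;
  wo_lt : wo_car -> wo_car -> Prop;
  wo_wf : well_founded wo_lt;
  wo_irrefl : forall x, ~ wo_lt x x;
  wo_trans : forall x y z, wo_lt x y -> wo_lt y z -> wo_lt x z;
  wo_total : forall x y, wo_lt x y \/ x = y \/ wo_lt y x }.

(* cf(kappa) > omega: kappa > 0 and every countable subset is strictly bounded. *)
Definition uncountable_cofinality (K : wellOrder) : Prop :=
  inhabited K /\ forall f : nat -> K, exists k : K, forall n, wo_lt K (f n) k.

Section Groupoid.
Variable K : wellOrder.
Local Notation lt := (wo_lt K).

Definition ge2 (a : K) : Prop := exists x y, lt x y /\ lt y a.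

(* Generators of the groupoid Z:
   Gen a xi b : a -> a is the free generator xi (xi < a) of G_a, inverted if b = false;
   Edge a b   : b -> a is the edge morphism y^b_a (a <> b). *)
Inductive letter : Type :=
| Gen (a xi : K) (sgn : bool)
| Edge (a b : K).

Definition valid (l : letter) : Prop :=
  match l with
  | Gen a xi _ => ge2 a /\ lt xi a
  | Edge a b => ge2 a /\ ge2 b /\ a <> b
  end.

Definition src (l : letter) : K := match l with Gen a _ _ => a | Edge _ b => b end.
Definition tgt (l : letter) : K := match l with Gen a _ _ => a | Edge a _ => a end.

(* Words are written in composition order: x1 :: x2 :: ... means x1 o x2 o ...
   path_ok t s w : w is a well-formed path (morphism) s -> t. *)
Fixpoint path_ok (t s : K) (w : list letter) : Prop :=
  match w with
  | [] => t = s /\ ge2 s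
  | x :: w' => valid x /\ tgt x = t /\ path_ok (src x) s w'
  end.

(* D^eps_a : a word of G_eps (letters (xi, sign)) placed in G_a. *)
Definition at_vertex (a : K) (g : list (K * bool)) : list letter :=
  map (fun p => Gen a (fst p) (snd p)) g.

Inductive rel_base : list letter -> list letter -> Prop :=
| rel_free (a xi : K) (b : bool) : rel_base [Gen a xi b; Gen a xi (negb b)] []
| rel_edge (a b : K) (g : list (K * bool)) :
    (forall p, In p g -> lt (fst p) a /\ lt (fst p) b) ->
    rel_base (Edge a b :: at_vertex b g ++ [Edge b a]) (at_vertex a g).

Definition step (t s : K) (w w' : list letter) : Prop :=
  exists p q l r, rel_base l r /\ w = p ++ l ++ q /\ w' = p ++ r ++ q /\
    path_ok t s w /\ path_ok t s w'.

Definition hom_eq (t s : K) (w w' : list letter) : Prop :=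
  path_ok t s w /\ path_ok t s w' /\ clos_refl_sym_trans _ (step t s) w w'.

Definition inv_letter (l : letter) : letter :=
  match l with Gen a xi b => Gen a xi (negb b) | Edge a b => Edge b a end.

Definition inv_word (w : list letter) : list letter := rev (map inv_letter w).

(* Z_X: morphisms in the image of some vertex group G_a. *)
Definition inZX (t s : K) (w : list letter) : Prop :=
  exists (a : K) (g : list (K * bool)),
    (forall p, In p g -> lt (fst p) a) /\ hom_eq t s w (at_vertex a g).

Definition is_edge (l : letter) : Prop := match l with Edge _ _ => True | _ => False end.

(* Z_Y: subgroupoid generated by the edges y^b_a. *)
Definition inZY (t s : K) (w : list letter) : Prop :=
  exists e, (forall x, In x e -> is_edge x) /\ hom_eq t s w e.

End Groupoid.

(* Main.v *)
Require Import Defs.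
From Stdlib Require Import List Relations ClassicalDescription.
Import ListNotations.

Section Proof.
Variable K : wellOrder.
Notation L := (letter K).

Lemma path_app (t m s : K) (w1 w2 : list L) :
  path_ok t m w1 -> path_ok m s w2 -> path_ok t s (w1 ++ w2).
Proof.
  revert t; induction w1 as [|x w IH]; intros t H1 H2; simpl in *.
  - destruct H1; subst; auto.
  - destruct H1 as (?&?&?); split; [|split]; auto; eapply IH; eauto.
Qed.

Lemma path_split (t s : K) (w1 w2 : list L) :
  path_ok t s (w1 ++ w2) -> exists m, path_ok t m w1 /\ path_ok m s w2.
Proof.
  revert t; induction w1 as [|x w IH]; intros t H; simpl in *.
  - exists t; split; auto. split; auto.
    revert t H; induction w2 as [|y w2 IH2]; intros t H; simpl in *.
    + destruct H; subst; auto.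
    + destruct H as (Hv&Ht&_). subst. destruct y; simpl in *; tauto.
  - destruct H as (?&?&H). destruct (IH _ H) as (m&?&?). exists m; simpl; auto.
Qed.

Lemma path_ge2_t (t s : K) (w : list L) : path_ok t s w -> ge2 K t.
Proof.
  destruct w as [|y w]; simpl; intros H.
  - destruct H; subst; auto.
  - destruct H as (Hv&Ht&_). subst. destruct y; simpl in *; tauto.
Qed.

Lemma path_ge2_s (t s : K) (w : list L) : path_ok t s w -> ge2 K s.
Proof.
  revert t; induction w as [|y w IH]; simpl; intros t H.
  - destruct H; auto.
  - destruct H as (_&_&H); eauto.
Qed.

Lemma one_step (t s : K) (p l r q : list L) :
  rel_base l r -> path_ok t s (p ++ l ++ q) -> path_ok t s (p ++ r ++ q) ->
  hom_eq t s (p ++ l ++ q) (p ++ r ++ q).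
Proof.
  intros. split; [|split]; auto. apply rst_step. exists p, q, l, r; auto.
Qed.

Lemma hom_eq_refl (t s : K) w : path_ok t s w -> hom_eq t s w w.
Proof. intros; split; [|split]; auto. apply rst_refl. Qed.

Lemma hom_eq_sym (t s : K) w w' : hom_eq t s w w' -> hom_eq t s w' w.
Proof. intros (?&?&?); split; [|split]; auto. apply rst_sym; auto. Qed.

Lemma hom_eq_trans (t s : K) w1 w2 w3 : hom_eq t s w1 w2 -> hom_eq t s w2 w3 -> hom_eq t s w1 w3.
Proof. intros (?&?&?) (?&?&?); split; [|split]; auto. eapply rst_trans; eauto. Qed.

Lemma hom_eq_cong (t s : K) t' s' p q w w' :
  hom_eq t s w w' -> path_ok t' t p -> path_ok s s' q ->
  hom_eq t' s' (p ++ w ++ q) (p ++ w' ++ q).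
Proof.
  intros (H1&H2&H3) Hp Hq.
  split; [|split]; try (eapply path_app; eauto; eapply path_app; eauto).
  assert (forall x y, clos_refl_sym_trans _ (step t s) x y -> (path_ok t s x <-> path_ok t s y)) as Hiff.
  { intros x y Hc; induction Hc; try tauto.
    destruct H as (?&?&?&?&?&?&?&?&?); tauto. }
  revert H1 H2. induction H3; intros.
  - apply rst_step. destruct H as (p0&q0&l&r&Hr&E1&E2&P1&P2).
    exists (p ++ p0), (q0 ++ q), l, r. subst. repeat split; auto.
    + rewrite !app_assoc. reflexivity.
    + rewrite !app_assoc. reflexivity.
    + eapply path_app; eauto; eapply path_app; eauto.
    + eapply path_app; eauto; eapply path_app; eauto.
  - apply rst_refl.
  - apply rst_sym; auto.
  - assert (path_ok t s y) by (apply (Hiff _ _ H3_); auto).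
    eapply rst_trans; eauto.
Qed.

Lemma rel_inv (x : L) : rel_base [x; inv_letter x] [].
Proof.
  destruct x as [a xi b | a b]; simpl.
  - apply rel_free.
  - exact (@rel_edge K a b [] (fun p H => False_ind _ H)).
Qed.

Lemma path_inv (t s : K) (w : list L) : path_ok t s w -> path_ok s t (inv_word w).
Proof.
  revert t; induction w as [|x w IH]; intros t H; unfold inv_word in *; simpl in *.
  - destruct H; subst; auto.
  - destruct H as (Hv&Ht&H). eapply path_app. apply IH; eauto.
    assert (ge2 K t) by (eapply path_ge2_t with (w := x :: w); simpl; eauto).
    destruct x; simpl in *; subst; repeat split; intuition.
Qed.

Lemma cancel_r (t s : K) (w : list L) : path_ok t s w -> hom_eq t t (w ++ inv_word w) [].
Proof.
  revert t; induction w as [|x w IH]; intros t H.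
  - simpl in *. apply hom_eq_refl. destruct H; subst; simpl; auto.
  - assert (Hp := H). destruct H as (Hv&Ht&H).
    assert (E : (x :: w) ++ inv_word (x :: w) = [x] ++ (w ++ inv_word w) ++ [inv_letter x]).
    { unfold inv_word; simpl. rewrite !app_assoc. reflexivity. }
    rewrite E. eapply hom_eq_trans.
    + apply hom_eq_cong with (t := src x) (s := src x). apply (IH _ H).
      simpl. split; auto. split; auto. split; auto. eapply path_ge2_t; eauto.
      pose proof (path_inv _ _ _ Hp) as Hi. unfold inv_word in Hi; simpl in Hi.
      apply path_split in Hi. destruct Hi as (m&_&Hi).
      destruct x; simpl in *; subst; intuition.
    + simpl. apply (one_step t t [] [x; inv_letter x] [] []). apply rel_inv.
      * simpl. pose proof (path_inv _ _ _ Hp) as Hi. unfold inv_word in Hi; simpl in Hi.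
        apply path_split in Hi. destruct Hi as (m&_&Hi).
        split; auto. split; auto. destruct x; simpl in *; subst; intuition.
      * simpl. split; auto. eapply path_ge2_t; eauto.
Qed.

Lemma inv_inv (w : list L) : inv_word (inv_word w) = w.
Proof.
  unfold inv_word. rewrite map_rev, rev_involutive, map_map.
  induction w as [|x w IH]; simpl; auto. rewrite IH. destruct x; simpl; auto.
  rewrite Bool.negb_involutive; auto.
Qed.

Lemma cancel_l (t s : K) (w : list L) : path_ok t s w -> hom_eq s s (inv_word w ++ w) [].
Proof.
  intros H. pose proof (cancel_r _ _ _ (path_inv _ _ _ H)) as C. rewrite inv_inv in C. exact C.
Qed.

Definition canc (x y : K * bool) : Prop := fst x = fst y /\ snd y = negb (snd x).
Definition actp (x : K * bool) (s : list (K * bool)) : list (K * bool) :=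
  match s with
  | y :: s' => if excluded_middle_informative (canc x y) then s' else x :: s
  | [] => [x]
  end.
Fixpoint reduced (s : list (K * bool)) : Prop :=
  match s with
  | x :: ((y :: _) as s') => ~ canc x y /\ reduced s'
  | _ => True
  end.
Definition actl (l : L) s := match l with Gen _ _ xi b => actp (xi, b) s | Edge _ _ _ => s end.
Definition Phi (w : list L) s := fold_right actl s w.

Lemma reduced_tl x s : reduced (x :: s) -> reduced s.
Proof. destruct s; simpl; tauto. Qed.

Lemma actp_red x s : reduced s -> reduced (actp x s).
Proof.
  destruct s as [|y s]; simpl; auto. intros H.
  destruct (excluded_middle_informative (canc x y)).
  - eapply reduced_tl; eauto.
  - simpl. split; auto.
Qed.

Lemma actp_inv k b s : reduced s -> actp (k, negb b) (actp (k, b) s) = s.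
Proof.
  destruct s as [|[y c] s]; simpl; intros H.
  - destruct (excluded_middle_informative (canc (k, negb b) (k, b))) as [|n]; auto.
    exfalso; apply n; split; simpl; try rewrite Bool.negb_involutive; auto.
  - destruct (excluded_middle_informative (canc (k, b) (y, c))) as [C|C].
    + destruct C as [E1 E2]; simpl in *; subst.
      destruct s as [|[y' c'] s]; simpl.
      * reflexivity.
      * destruct (excluded_middle_informative (canc (y, negb b) (y', c'))) as [C|C]; auto.
        exfalso. apply (proj1 H). exact C.
    + simpl. destruct (excluded_middle_informative (canc (k, negb b) (k, b))) as [|n]; auto.
      exfalso; apply n; split; simpl; try rewrite Bool.negb_involutive; auto.
Qed.

Lemma actl_red l s : reduced s -> reduced (actl l s).
Proof. destruct l; simpl; auto using actp_red. Qed.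

Lemma Phi_red w s : reduced s -> reduced (Phi w s).
Proof. induction w; simpl; auto using actl_red. Qed.

Lemma Phi_app w1 w2 s : Phi (w1 ++ w2) s = Phi w1 (Phi w2 s).
Proof. unfold Phi; apply fold_right_app. Qed.

Lemma Phi_vertex a g s : Phi (at_vertex K a g) s = fold_right actp s g.
Proof. induction g as [|[k b] g IH]; simpl; auto. rewrite <- IH. reflexivity. Qed.

Lemma Phi_rel l r s : rel_base l r -> reduced s -> Phi l s = Phi r s.
Proof.
  intros H Hs; destruct H; simpl.
  - replace b with (negb (negb b)) at 1 by apply Bool.negb_involutive.
    apply actp_inv; auto.
  - rewrite Phi_app, !Phi_vertex. reflexivity.
Qed.

Lemma Phi_step (t s : K) w w' r : step t s w w' -> reduced r -> Phi w r = Phi w' r.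
Proof.
  intros (p&q&l&r'&H&E1&E2&_&_) Hr; subst.
  rewrite !Phi_app. f_equal. apply Phi_rel; auto. apply Phi_red; auto.
Qed.

Lemma Phi_homeq (t s : K) w w' r : hom_eq t s w w' -> reduced r -> Phi w r = Phi w' r.
Proof.
  intros (_&_&H) Hr. induction H; auto.
  - eapply Phi_step; eauto.
  - congruence.
Qed.

Lemma actl_inv x s : reduced s -> actl (inv_letter x) (actl x s) = s.
Proof. destruct x; simpl; auto. apply actp_inv. Qed.

Lemma Phi_inv2 w s : reduced s -> Phi (inv_word w) (Phi w s) = s.
Proof.
  revert s; induction w as [|x w IH]; intros s Hs; simpl; auto.
  unfold inv_word; simpl. rewrite Phi_app. simpl.
  rewrite actl_inv by (apply Phi_red; auto). apply IH; auto.
Qed.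

Lemma Phi_edges (e : list L) s : (forall x, In x e -> is_edge x) -> Phi e s = s.
Proof.
  induction e as [|x e IH]; simpl; intros H; auto.
  assert (Hx := H x (or_introl eq_refl)). destruct x; simpl in *; try contradiction.
  apply IH; auto.
Qed.

Lemma in_actp y x s : In y (actp x s) -> y = x \/ In y s.
Proof.
  destruct s as [|z s]; simpl.
  - intuition.
  - destruct (excluded_middle_informative (canc x z)); simpl; intuition.
Qed.

Lemma in_fold y g : In y (fold_right actp [] g) -> In y g.
Proof.
  induction g as [|x g IH]; simpl; auto. intros H. apply in_actp in H. intuition.
Qed.

Lemma path_vertex (a : K) g : ge2 K a -> (forall p, In p g -> wo_lt K (fst p) a) ->
  path_ok a a (at_vertex K a g).
Proof.
  intros Ha; induction g as [|p g IH]; simpl; intros H; auto.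
  repeat split; auto.
Qed.

Lemma red_hom (a : K) g : ge2 K a -> (forall p, In p g -> wo_lt K (fst p) a) ->
  hom_eq a a (at_vertex K a g) (at_vertex K a (fold_right actp [] g)).
Proof.
  intros Ha; induction g as [|p g IH]; simpl; intros H.
  - apply hom_eq_refl. simpl; auto.
  - assert (Hg : forall q, In q g -> wo_lt K (fst q) a) by auto.
    assert (Hr : forall q, In q (fold_right actp [] g) -> wo_lt K (fst q) a)
      by (intros q Hq; apply Hg, in_fold; auto).
    rewrite <- (app_nil_r (at_vertex K a g)). change (Gen K a (fst p) (snd p) :: at_vertex K a g ++ [])
      with ([Gen K a (fst p) (snd p)] ++ at_vertex K a g ++ []).
    eapply hom_eq_trans.
    + apply (hom_eq_cong a a a a [Gen K a (fst p) (snd p)] [] _ _ (IH Hg)).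
      * simpl. repeat split; auto.
      * simpl; auto.
    + simpl. rewrite app_nil_r.
      destruct (fold_right actp [] g) as [|y r] eqn:Er; simpl.
      * apply hom_eq_refl. simpl. repeat split; auto.
      * destruct (excluded_middle_informative (canc p y)) as [[C1 C2]|C].
        -- destruct p as [k b], y as [k' b']; simpl in *; subst.
           apply (one_step a a [] [Gen K a k' b; Gen K a k' (negb b)] [] (at_vertex K a r)).
           ++ apply rel_free.
           ++ pose proof (path_vertex a ((k', b) :: (k', negb b) :: r) Ha) as P.
              simpl in P. apply P. intros q [Hq|[Hq|Hq]]; subst; simpl; auto.
              all: try (apply (H (k', b)); auto); try (apply (Hr (k', negb b)); simpl; auto);
                   try (apply Hr; simpl; auto).
           ++ apply (path_vertex a r Ha). intros q Hq; apply Hr; simpl; auto.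
        -- apply hom_eq_refl.
           pose proof (path_vertex a (p :: y :: r) Ha) as P. simpl in P. apply P.
           intros q [Hq|Hq]; subst; auto.
Qed.
End Proof.

Arguments path_app {K}.
Arguments path_split {K}.
Arguments path_ge2_t {K}.
Arguments path_ge2_s {K}.
Arguments one_step {K}.
Arguments hom_eq_refl {K}.
Arguments hom_eq_sym {K}.
Arguments hom_eq_trans {K}.
Arguments hom_eq_cong {K}.
Arguments rel_inv {K}.
Arguments path_inv {K}.
Arguments cancel_r {K}.
Arguments inv_inv {K}.
Arguments cancel_l {K}.
Arguments canc {K}.
Arguments actp {K}.
Arguments reduced {K}.
Arguments actl {K}.
Arguments Phi {K}.
Arguments reduced_tl {K}.
Arguments actp_red {K}.
Arguments actp_inv {K}.
Arguments actl_red {K}.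
Arguments Phi_red {K}.
Arguments Phi_app {K}.
Arguments Phi_vertex {K}.
Arguments Phi_rel {K}.
Arguments Phi_step {K}.
Arguments Phi_homeq {K}.
Arguments actl_inv {K}.
Arguments Phi_inv2 {K}.
Arguments Phi_edges {K}.
Arguments in_actp {K}.
Arguments in_fold {K}.
Arguments path_vertex {K}.
Arguments red_hom {K}.
Theorem lemma3p12 (K : wellOrder) (hK : uncountable_cofinality K)
  (a b c : K) (z u v : list (letter K)) :
  path_ok a a z ->          (* z : a -> a *)
  path_ok b a u ->          (* u : a -> b *)
  path_ok c a v ->          (* v : a -> c *)
  inZX b b (u ++ z ++ inv_word u) ->
  inZY c c (v ++ z ++ inv_word v) ->
  hom_eq a a z [].
Proof.
  intros Hz Hu Hv [a' [g [Hg HX]]] [e [He HY]].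
  assert (Z1 : forall t, reduced t -> Phi z t = t).
  { intros t Ht.
    assert (E : Phi v (Phi z t) = Phi v t).
    { rewrite <- (Phi_inv2 v t Ht) at 1.
      rewrite <- (Phi_app z (inv_word v)), <- (Phi_app v (z ++ inv_word v)). rewrite (Phi_homeq _ _ _ _ (Phi v t) HY) by (apply Phi_red; auto).
      apply Phi_edges; auto. }
    rewrite <- (Phi_inv2 v (Phi z t)) by (apply Phi_red; auto).
    rewrite E. apply Phi_inv2; auto. }
  assert (Z2 : fold_right (actp (K:=K)) [] g = []).
  { rewrite <- Phi_vertex with (a := a').
    rewrite <- (Phi_homeq _ _ _ _ [] HX) by (simpl; auto).
    rewrite !Phi_app. rewrite Z1 by (apply Phi_red; simpl; auto).
    rewrite <- (inv_inv u) at 1. apply Phi_inv2. simpl; auto. }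
  assert (Z3 : hom_eq b b (u ++ z ++ inv_word u) []).
  { eapply hom_eq_trans; [exact HX|].
    destruct g as [|p g'].
    - apply hom_eq_refl. simpl. split; auto. eapply path_ge2_t; apply (proj1 HX).
    - destruct HX as (_&P&_). simpl in P. destruct P as (P1&P2&_). subst a'.
      pose proof (red_hom b (p :: g') (proj1 P1) Hg) as R. rewrite Z2 in R. exact R. }
  pose proof (cancel_l _ _ _ Hu) as C.
  pose proof (path_inv _ _ _ Hu) as Hiu.
  assert (Ha : ge2 K a) by (eapply path_ge2_t; eauto).
  eapply hom_eq_trans.
  2:{ eapply hom_eq_trans; [|exact C].
      pose proof (hom_eq_cong _ _ _ _ (inv_word u) u _ _ Z3 Hiu Hu) as D.
      simpl in D. exact D. }
  apply hom_eq_sym.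
  replace (inv_word u ++ (u ++ z ++ inv_word u) ++ u)
    with ((inv_word u ++ u) ++ z ++ (inv_word u ++ u)) by (rewrite !app_assoc; reflexivity).
  eapply hom_eq_trans.
  - apply (hom_eq_cong _ _ _ _ [] (z ++ inv_word u ++ u) _ _ C).
    simpl; auto. eapply path_app; eauto. eapply path_app; eauto.
  - simpl. rewrite <- (app_nil_r (z ++ inv_word u ++ u)). rewrite <- app_assoc.
    eapply hom_eq_trans.
    + apply (hom_eq_cong _ _ _ _ z [] _ _ C); auto. simpl; auto.
    + rewrite !app_nil_r. apply hom_eq_refl; auto.
Qed.
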